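(* There is an absolute constant $C>0$ such that the following holds. Let $\ell,w\in\mathbb{N}$, $\Delta=2^\ell$, $\mathbf{s}\in\mathbb{R}_{\ge0}^{G_\Delta}$, and let $\boldsymbol{\nu}_i\in\mathbb{R}^{C_{2^i}}$ ($i=0,\dots,\ell$) be arbitrary vectors. Set $\mathbf{y}'_i=2^{-i}(\mathbf{P}_i\mathbf{s}+\boldsymbol{\nu}_i)$ and $\mathbf{y}'=[\mathbf{y}'_0\cdots\mathbf{y}'_\ell]$. Run the following procedure: $S_0=C_1$; for $i=1,\dots,\ell$, let $T_i$ be the set of children of cells in $S_{i-1}$ and let $S_i$ be a set of $\min\{w,|T_i|\}$ cells of $T_i$ with the largest values of $\mathbf{y}'$ (ties broken arbitrarily); let $S=\bigcup_{i=0}^\ell S_i$ and $\hat{\mathbf{y}}=\mathbf{y}'|_S$. Let $\mathbf{y}^*\in\arg\min_{\mathbf{y}\in\mathcal{M}_w}\|\mathbf{P}\mathbf{s}-\mathbf{y}\|_1$, let $T^*\in\mathcal{T}_w$ be such that $\mathrm{supp}(\mathbf{y}^* )\subseteq T^*$, and for $i=0,\dots,\ell$ let $T^*_i=T^*\cap C_{2^i}$ and $V_i=T^*_i\setminus S_i$. Then $$\|\hat{\mathbf{y}}-\mathbf{P}\mathbf{s}\|_1\le 3\|\mathbf{y}^*-\mathbf{P}\mathbf{s}\|_1+C\sum_{i=0}^{\ell}2^{-i}\big\|\boldsymbol{\nu}_i|_{V_i\cup S_i}\big\|_1.$$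
   Context: $G_\Delta=\{(a/\Delta,b/\Delta): a,b\in\{0,\dots,\Delta-1\}\}$. For $i\ge0$, the level-$i$ cells are $C_{2^i}=\{[a,a+2^{-i})\times[b,b+2^{-i}) : (a,b)\in G_{2^i}\}$ (so $C_1=C_{2^0}$ consists of the single root cell $[0,1)^2$). $\mathbf{P}_i\in\{0,1\}^{C_{2^i}\times G_\Delta}$ has $\mathbf{P}_i(c,p)=1$ iff $p\in c$. The scaled pyramidal transform $\mathbf{P}$ is the matrix with rows indexed by $\bigcup_{i=0}^\ell C_{2^i}$ obtained by stacking $\mathbf{P}_0,2^{-1}\mathbf{P}_1,\dots,2^{-\ell}\mathbf{P}_\ell$. Vectors indexed by $\bigcup_i C_{2^i}$ are written $\mathbf{y}=[\mathbf{y}_0\cdots\mathbf{y}_\ell]$ with $\mathbf{y}_i\in\mathbb{R}^{C_{2^i}}$. A cell $c'\in C_{2^i}$ ($i\ge1$) is a child of $c\in C_{2^{i-1}}$ if $c'\subseteq c$; this makes the cells a tree rooted at $[0,1)^2$ with every internal node having four children. $\mathcal{T}_w$ is the set of subtrees (sets of cells containing the root and closed under taking parents) with at most $w$ cells at each level. $\mathcal{M}_w$ is the set of $\mathbf{y}=[\mathbf{y}_0\cdots\mathbf{y}_\ell]$ with $\mathbf{y}_i\in\mathbb{R}_{\ge0}^{C_{2^i}}$ such that (1) $\mathrm{supp}(\mathbf{y})\subseteq T$ for some $T\in\mathcal{T}_w$, and (2) for all $i\in\{0,\dots,\ell-1\}$ and $p\in C_{2^i}$, $\mathbf{y}(p)\ge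 2\sum_{c\text{ child of }p}\mathbf{y}(c)$. For a vector $\mathbf{v}$ and index set $S$, $\mathbf{v}|_S$ agrees with $\mathbf{v}$ on $S$ and is $0$ elsewhere; $\mathrm{supp}$ denotes the set of nonzero coordinates. *)

(* Defs.v *)
From HB Require Import structures.
From mathcomp Require Import all_boot all_order all_algebra.
From mathcomp Require Import reals.
Set Implicit Arguments. Unset Strict Implicit. Unset Printing Implicit Defensive.
Import Order.TTheory GRing.Theory Num.Theory.
Local Open Scope ring_scope.

Section Pyramid.
Variable l : nat. (* Delta = 2^l *)

(* grid points of G_Delta: (a,b) stands for (a/Delta, b/Delta) *)
Definition point := ('I_(2 ^ l) * 'I_(2 ^ l))%type.

(* a cell (i,a,b) is [a/2^i,(a+1)/2^i) x [b/2^i,(b+1)/2^i), with a,b < 2^i, i <= l *)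
Definition raw_cell := ('I_l.+1 * 'I_(2 ^ l) * 'I_(2 ^ l))%type.
Definition valid_cell (c : raw_cell) : bool :=
  (nat_of_ord c.1.2 < 2 ^ c.1.1)%N && (nat_of_ord c.2 < 2 ^ c.1.1)%N.
Definition cell := {c : raw_cell | valid_cell c}.

Definition level (c : cell) : nat := (sval c).1.1.
Definition cx (c : cell) : nat := (sval c).1.2.
Definition cy (c : cell) : nat := (sval c).2.

Definition in_cell (c : cell) (p : point) : bool :=
  ((nat_of_ord p.1) %/ 2 ^ (l - level c) == cx c)%N &&
  ((nat_of_ord p.2) %/ 2 ^ (l - level c) == cy c)%N.

Definition is_child (c' c : cell) : bool :=
  [&& level c' == (level c).+1, (cx c' %/ 2 == cx c)%N & (cy c' %/ 2 == cy c)%N].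

Variable R : realType.

Definition Pi_s (s : point -> R) (c : cell) : R := \sum_(p | in_cell c p) s p.
Definition Ps (s : point -> R) (c : cell) : R := ((2 : R) ^+ level c)^-1 * Pi_s s c.

Definition norm1 (v : cell -> R) : R := \sum_c `|v c|.

Definition subtree (T : {set cell}) : Prop :=
  (forall c, level c = 0%N -> c \in T) /\
  (forall c' c, is_child c' c -> c' \in T -> c \in T).

Definition tree_w (w : nat) (T : {set cell}) : Prop :=
  subtree T /\ forall i : nat, (#|[set c in T | level c == i]| <= w)%N.

Definition M_w (w : nat) (y : cell -> R) : Prop :=
  (forall c, 0 <= y c) /\
  (exists T, tree_w w T /\ forall c, y c != 0 -> c \in T) /\
  (forall p, (level p < l)%N -> 2 * \sum_(c | is_child c p) y c <= y p).

Definition children (A : {set cell}) : {set cell} :=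
  [set c | [exists p in A, is_child c p]].

(* S is a valid run of the greedy procedure on y' with width w
   (ties broken arbitrarily) *)
Definition greedy_run (w : nat) (y' : cell -> R) (S : nat -> {set cell}) : Prop :=
  S 0%N = [set c | level c == 0%N] /\
  forall i : nat, (0 < i <= l)%N ->
    [/\ S i \subset children (S i.-1),
        #|S i| = minn w #|children (S i.-1)| &
        forall c c', c \in S i -> c' \in children (S i.-1) :\: S i -> y' c' <= y' c].

End Pyramid.

(* Main.v *)
Require Import Defs.
From HB Require Import structures.
From mathcomp Require Import all_boot all_order all_algebra.
From mathcomp Require Import reals.
From mathcomp Require Import lra zify.
Import Order.TTheory GRing.Theory Num.Theory.
Set Implicit Arguments. Unset Strict Implicit. Unset Printing Implicit Defensive.
Local Open Scope ring_scope.

Lemma sum_le_card (T : finType) (R : realDomainType) (A B : {set T}) (f g : T -> R) :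
  (#|A| <= #|B|)%N -> (forall b, b \in B -> 0 <= g b) ->
  (forall a b, a \in A -> b \in B -> f a <= g b) ->
  \sum_(a in A) f a <= \sum_(b in B) g b.
Proof.
move Hn: #|A| => n; elim: n A B Hn => [|n IH] A B HA HAB Hg Hfg.
  move/eqP: HA; rewrite cards_eq0 => /eqP ->; rewrite big_set0.
  by apply: sumr_ge0.
have [a Ha] : exists a, a \in A by apply/set0Pn; rewrite -card_gt0 HA.
have [b Hb] : exists b, b \in B by apply/set0Pn; rewrite -card_gt0 (leq_trans _ HAB) // HA.
rewrite (big_setD1 a Ha) (big_setD1 b Hb) /=; apply: lerD; first exact: Hfg.
apply: IH.

- by move: HA; rewrite (cardsD1 a A) Ha => -[].
- by move: HAB; rewrite (cardsD1 b B) Hb.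
- by move=> c; rewrite in_setD1 => /andP[_ /Hg].
- by move=> c d; rewrite !in_setD1 => /andP[_ Hc] /andP[_ Hd]; apply: Hfg.
Qed.

Lemma recur_sum (R : realFieldType) (a r : nat -> R) (n : nat) :
  (forall i, 0 <= a i) -> a 0%N <= r 0%N ->
  (forall i, (0 < i <= n)%N -> a i <= r i + a i.-1 / 2) ->
  \sum_(i < n.+1) a i <= 2 * \sum_(i < n.+1) r i.
Proof.
move=> Ha0 H0 Hrec.
suff H : forall k, (k <= n)%N -> \sum_(i < k.+1) a i + a k <= 2 * \sum_(i < k.+1) r i.
  by have := H n (leqnn n); have := Ha0 n; lra.
elim=> [|k IH] Hk.
  rewrite !big_ord_recr /= !big_ord0; lra.
rewrite big_ord_recr [X in _ <= 2 * X]big_ord_recr /=.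
have := IH (ltnW Hk); have := Hrec k.+1 Hk; simpl; lra.
Qed.
Lemma level_le l (c : cell l) : (level c <= l)%N.
Proof. by case: c => [[[i a] b] Hc]; rewrite /level /= -ltnS. Qed.

Lemma cell_ext l (c c' : cell l) :
  level c = level c' -> cx c = cx c' -> cy c = cy c' -> c = c'.
Proof.
case: c => [[[i a] b] Hc]; case: c' => [[[i' a'] b'] Hc'].
rewrite /level /cx /cy /= => /ord_inj Ei /ord_inj Ea /ord_inj Eb.
subst; congr exist; exact: bool_irrelevance.
Qed.

Lemma parent_ex l (c : cell l) : (0 < level c)%N -> exists p, is_child c p.
Proof.
case: c => [[[i a] b] Hv].
have /andP[Ha Hb] : (a < 2 ^ i)%N && (b < 2 ^ i)%N := Hv.
rewrite /level /= => Hi.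
have Hi' : (i.-1 < l.+1)%N by rewrite (leq_ltn_trans (leq_pred _)).
have Ha' : (a %/ 2 < 2 ^ l)%N by rewrite (leq_ltn_trans (leq_div _ _)).
have Hb' : (b %/ 2 < 2 ^ l)%N by rewrite (leq_ltn_trans (leq_div _ _)).
have Hv' : valid_cell ((Ordinal Hi', Ordinal Ha'), Ordinal Hb').
  by rewrite /valid_cell /= !ltn_divLR // -expnSr prednK // Ha Hb.
exists (exist (@valid_cell l) _ Hv').
by rewrite /is_child /level /cx /cy /= prednK // !eqxx.
Qed.

Lemma child_level l (c p : cell l) : is_child c p -> level c = (level p).+1.
Proof. by case/and3P => /eqP. Qed.

Lemma child_in_cell l (c p : cell l) q :
  is_child c p -> in_cell c q -> in_cell p q.
Proof.
move=> Hcp; have Hl := child_level Hcp; move: Hcp.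
case/and3P => _ /eqP Hx /eqP Hy /andP[/eqP Hqx /eqP Hqy].
have Hle := level_le c.
have E : (2 ^ (l - level p) = 2 ^ (l - level c) * 2)%N.
  by rewrite -expnSr Hl subnSK // -Hl.
by rewrite /in_cell E !divnMA Hqx Hqy Hx Hy !eqxx.
Qed.

Lemma child_unique l (c c' p : cell l) q :
  is_child c p -> in_cell c q -> is_child c' p -> in_cell c' q -> c = c'.
Proof.
move=> H1 H2 H3 H4; have E : level c = level c'.
  by rewrite (child_level H1) (child_level H3).
apply: cell_ext => //.
  by move: H2 H4; rewrite /in_cell E => /andP[/eqP <- _] /andP[/eqP <- _].
by move: H2 H4; rewrite /in_cell E => /andP[_ /eqP <-] /andP[_ /eqP <-].
Qed.

Lemma child_Pi (R : realType) l (s : point l -> R) (p : cell l) :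
  (forall q, 0 <= s q) ->
  \sum_(c | is_child c p) Pi_s s c <= Pi_s s p.
Proof.
move=> hs; rewrite /Pi_s.
rewrite big_mkcond /=.
under eq_bigr => c _ do rewrite big_mkcond /= (fun_if (fun x => x)) .
rewrite [X in X <= _](_ : _ = \sum_c \sum_q (if is_child c p && in_cell c q then s q else 0)); last first.
  by apply: eq_bigr => c _; case: (is_child c p) => //; rewrite big1.
rewrite exchange_big /= [X in _ <= X]big_mkcond /=; apply: ler_sum => q _.
case: (pickP (fun c => is_child c p && in_cell c q)) => [c0 /andP[H1 H2]|H0]; last first.
  rewrite big1; last by move=> c _; rewrite H0.
  by case: ifP.
rewrite (bigD1 c0) //=.
rewrite big1 ?addr0.
  by rewrite H1 H2 (child_in_cell H1 H2).
move=> c Hc; case: ifP => // /andP[H3 H4].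
by move: Hc; rewrite (child_unique H3 H4 H1 H2) eqxx.
Qed.

Lemma Ps_ge0 (R : realType) l (s : point l -> R) c : (forall q, 0 <= s q) -> 0 <= Ps s c.
Proof.
move=> hs; rewrite /Ps mulr_ge0 // ?invr_ge0 ?exprn_ge0 //; exact: sumr_ge0.
Qed.

Lemma child_Ps (R : realType) l (s : point l -> R) (p : cell l) :
  (forall q, 0 <= s q) ->
  \sum_(c | is_child c p) Ps s c <= Ps s p / 2.
Proof.
move=> hs; rewrite /Ps.
under eq_bigr => c Hc do rewrite (child_level Hc).
rewrite -mulr_sumr.
have := child_Pi p hs; set X := \sum_(_ | _) _ => HX.
have h2 : 0 < (2:R) ^+ level p by rewrite exprn_gt0.
rewrite exprS invfM -mulrA [2^-1 * _]mulrC -mulrA -mulrA.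
apply: ler_wpM2l; first by rewrite invr_ge0 ltW.
by apply: ler_wpM2r; rewrite // invr_ge0.
Qed.

Lemma S_level l (R : realType) w (y' : cell l -> R) S :
  greedy_run w y' S -> forall j, (j <= l)%N -> forall c, c \in S j -> level c = j.
Proof.
move=> [H0 Hs]; elim=> [|j IH] Hj c.
  by rewrite H0 inE => /eqP.
move=> Hc; have [Hsub _ _] := Hs j.+1 Hj.
move/subsetP: Hsub => /(_ c Hc); rewrite inE => /existsP [p /andP[Hp Hcp]].
by rewrite (child_level Hcp) (IH (ltnW Hj) p Hp).
Qed.

Lemma sum_levels l (R : realType) (F : cell l -> R) :
  \sum_c F c = \sum_(i < l.+1) \sum_c (if level c == i then F c else 0).
Proof.
rewrite exchange_big; apply: eq_bigr => c _.
rewrite (bigD1 (sval c).1.1) //= /level eqxx big1 ?addr0 // => i Hi.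
case: eqP => // E; case/eqP: Hi; apply: ord_inj; by rewrite -E.
Qed.
Theorem lemma3 :
  exists C : nat, (0 < C)%N /\
  forall (R : realType) (l w : nat) (s : point l -> R) (nu : cell l -> R)
         (S : nat -> {set cell l}) (ystar : cell l -> R) (Tstar : {set cell l}),
    (forall p, 0 <= s p) ->
    let y' := fun c : cell l => ((2 : R) ^+ level c)^-1 * (Pi_s s c + nu c) in
    greedy_run w y' S ->
    M_w w ystar ->
    (forall y, M_w w y -> norm1 (fun c => Ps s c - ystar c) <= norm1 (fun c => Ps s c - y c)) ->
    tree_w w Tstar ->
    (forall c, ystar c != 0 -> c \in Tstar) ->
    let Sall := \bigcup_(i < l.+1) S i in
    let yhat := fun c => if c \in Sall then y' c else 0 in
    let V := fun i : nat => [set c in Tstar | level c == i] :\: S i in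
    norm1 (fun c => yhat c - Ps s c)
      <= 3 * norm1 (fun c => ystar c - Ps s c)
         + C%:R * \sum_(i < l.+1) ((2 : R) ^+ i)^-1 *
              \sum_(c | (level c == i) && (c \in V i :|: S i)) `|nu c|.
Proof.
exists 3%N; split => //.
move=> R l w s nu S ystar Tstar hs y' Hg HM Hopt HT Hsupp.
pose Sall := \bigcup_(i < l.+1) S i.
pose yhat := fun c => if c \in Sall then y' c else 0.
pose V := fun i : nat => [set c in Tstar | level c == i] :\: S i.
change (norm1 (fun c => yhat c - Ps s c)
      <= 3 * norm1 (fun c => ystar c - Ps s c)
         + 3%:R * \sum_(i < l.+1) ((2 : R) ^+ i)^-1 *
              \sum_(c | (level c == i) && (c \in V i :|: S i)) `|nu c|).
have Hx0 : forall c, 0 <= Ps s c by move=> c; exact: Ps_ge0.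
set x := Ps s in Hx0 *.
set n := fun c : cell l => ((2:R) ^+ level c)^-1 * nu c.
have Hy' : forall c, y' c = x c + n c by move=> c; rewrite /y' /x /n /Ps mulrDr.
have HSl := S_level Hg.
have [HS0 Hgr] := Hg.
have HSall : forall c, (c \in Sall) = (c \in S (level c)).
  move=> c; apply/bigcupP/idP => [[i _ Hc]|Hc].
    by rewrite (HSl i _ c Hc) // -ltnS.
  by exists (sval c).1.1.
have HV : forall i c, (c \in V i) = [&& c \in Tstar, level c == i & c \notin S i].
  move=> i c; rewrite /V !inE.
  by case: (c \in S i); case: (c \in Tstar); case: (level c == i).
have Hys : forall c, c \notin Tstar -> ystar c = 0.
  move=> c Hc; apply/eqP; apply: contraNT Hc; exact: Hsupp.
pose L : nat -> R := fun i => \sum_c (if level c == i then `|yhat c - x c| else 0).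
pose E : nat -> R := fun i => \sum_c (if level c == i then `|ystar c - x c| else 0).
pose N : nat -> R := fun i => \sum_c (if (level c == i) && (c \in V i :|: S i) then `|n c| else 0).
pose NS : nat -> R := fun i => \sum_c (if c \in S i then `|n c| else 0).
pose E1 : nat -> R := fun i => \sum_c (if (level c == i) && (c \notin S i) && (c \notin Tstar)
                     then `|ystar c - x c| else 0).
pose E2 : nat -> R := fun i => \sum_c (if (c \in S i) && (c \notin Tstar) then `|ystar c - x c| else 0).
pose a : nat -> R := fun i => \sum_c (if c \in V i then x c else 0).
have step2 : forall i, (i <= l)%N -> L i <= NS i + E1 i + a i.
  move=> i Hi; rewrite /L /NS /E1 /a -!big_split /=; apply: ler_sum => c _.
  rewrite HV; have := Hx0 c; have := normr_ge0 (n c).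
  case: (eqVneq (level c) i) => [Hl|Hl]; last first.
    have HcS : (c \in S i) = false.
      by apply/negP => /(HSl _ Hi) E0; move/eqP: Hl; rewrite E0.
    by rewrite HcS andbF /=; lra.
  rewrite /yhat HSall Hl Hy'.
  case: ifP => HcS /=.
    rewrite (_ : x c + n c - x c = n c); last by rewrite addrAC subrr add0r.
    by move=> *; rewrite !andbF /= !addr0.
  rewrite sub0r normrN (ger0_norm (Hx0 c)).
  case HTc : (c \in Tstar) => /=; first lra.
  by rewrite Hys ?HTc // sub0r normrN (ger0_norm (Hx0 c)); lra.
have step3 : forall i, (i <= l)%N -> E1 i + E2 i <= E i.
  move=> i Hi; rewrite /E1 /E2 /E -big_split; apply: ler_sum => c _.
  have := normr_ge0 (ystar c - x c).
  case: (eqVneq (level c) i) => [Hl|Hl].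
    by case: (c \in S i); case: (c \in Tstar) => /=; lra.
  have HcS : (c \in S i) = false.
    by apply/negP => /(HSl _ Hi) E0; move/eqP: Hl; rewrite E0.
  by rewrite HcS /=; lra.
have step4 : forall i, (i <= l)%N -> NS i <= N i.
  move=> i Hi; apply: ler_sum => c _.
  case HcS: (c \in S i); last by case: ifP.
  by rewrite (HSl _ Hi _ HcS) eqxx inE HcS orbT.
have step5 : a 0%N = 0.
  apply: big1 => c _; rewrite HV HS0 inE.
  by case: (level c == 0%N); rewrite ?andbF.
have step6 : forall i, (0 < i <= l)%N -> a i <= (E2 i + N i) + a i.-1 / 2.
  move=> i Hi; have [Hsub Hcard Hord] := Hgr i Hi; case/andP: Hi => Hi0 Hil.
  set ch := children (S i.-1) in Hsub Hcard Hord.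
  pose Rt := V i :&: ch. pose B := S i :\: Tstar. pose NR := V i :\: ch.
  have Hsplit : a i = \sum_(c in Rt) x c + \sum_(c in NR) x c.
    rewrite [X in _ = X + _]big_mkcond [X in _ = _ + X]big_mkcond /a -big_split.
    apply: eq_bigr => c _ /=; rewrite /Rt /NR in_setI [c \in V i :\: ch]in_setD.
    by case: (c \in V i); case: (c \in ch) => /=; rewrite ?addr0 ?add0r.
  have Hcard' : (#|Rt| <= #|B|)%N.
    case: (set_0Vmem Rt) => [->|[r Hr]]; first by rewrite cards0.
    move: Hr; rewrite /Rt in_setI HV => /andP[/and3P[HrT Hrl HrS] Hrch].
    have HSw : #|S i| = w.
      have Hsub' : r |: S i \subset ch by rewrite subUset sub1set Hrch Hsub.
      have := subset_leq_card Hsub'; rewrite cardsU1 HrS /=.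
      move: Hcard; clear; case: (leqP w #|ch|) => _ -> //; by rewrite add1n ltnn.
    have HTw : (#|[set c in Tstar | level c == i]| <= w)%N := HT.2 i.
    have E1' := cardsID (S i) [set c in Tstar | level c == i].
    have E2' := cardsID Tstar (S i).
    have Eq : [set c in Tstar | level c == i] :&: S i = S i :&: Tstar.
      apply/setP => c; rewrite !inE; case Hc: (c \in S i); rewrite ?andbF ?andbT //=.
      by rewrite (HSl _ Hil _ Hc) eqxx andbT.
    rewrite Eq in E1'.
    have : (#|Rt| <= #|V i|)%N by apply: subset_leq_card; apply: subsetIl.
    move: HSw HTw E1' E2'; rewrite /Rt /V /B; clear; lia.
  have HF5 : \sum_(c in Rt) (x c - `|n c|) <= \sum_(c in B) (`|ystar c - x c| + `|n c|).
    apply: sum_le_card Hcard' _ _.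
    - by move=> b _; rewrite addr_ge0.
    - move=> r b; rewrite /Rt /B in_setI [b \in _]in_setD HV => /andP[/and3P[_ _ HrS] Hrch] /andP[HbT HbS].
      have HyR := Hord b r HbS ltac:(by rewrite in_setD HrS Hrch).
      rewrite !Hy' in HyR.
      rewrite Hys // sub0r normrN (ger0_norm (Hx0 b)).
      have h1 := ler_norm (n b); have h2 := ler_norm (- n r); rewrite normrN in h2.
      lra.
  have HE2 : \sum_(c in B) `|ystar c - x c| <= E2 i.
    rewrite /E2 big_mkcond; apply: ler_sum => c _; rewrite /B !inE.
    by case: (c \in S i); case: (c \in Tstar).
  have HN : \sum_(c in Rt) `|n c| + \sum_(c in B) `|n c| <= N i.
    rewrite [X in X + _ <= _]big_mkcond [X in _ + X <= _]big_mkcond -big_split.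
    apply: ler_sum => c _ /=; rewrite /Rt /B in_setI [c \in S i :\: _]in_setD in_setU HV.
    have := normr_ge0 (n c).
    case Hc: (c \in S i); first rewrite (HSl _ Hil _ Hc) eqxx /=.
      by case: (c \in Tstar); case: (c \in ch) => /=; lra.
    by case: (c \in Tstar); case: (c \in ch); case: (level c == i) => /=; lra.
  have HNR : \sum_(c in NR) x c <= a i.-1 / 2.
    apply: (@le_trans _ _ (\sum_c \sum_p (if (p \in V i.-1) && is_child c p then x c else 0))).
      rewrite big_mkcond; apply: ler_sum => c _.
      case: ifP => Hc; last by apply: sumr_ge0 => p _; case: ifP => // _; apply: Hx0.
      move: Hc; rewrite /NR in_setD HV => /andP[Hch /and3P[HcT /eqP Hcl HcS]].
      have [p Hp] := @parent_ex l c ltac:(by rewrite Hcl).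
      have Hpl := child_level Hp.
      have HpV : p \in V i.-1.
        rewrite HV; apply/and3P; split.
        - by case: HT => [[_ Hcl'] _]; apply: Hcl' Hp HcT.
        - by rewrite -Hcl Hpl /=.
        - apply/negP => HpS; move/negP: Hch; apply; rewrite /ch inE.
          by apply/existsP; exists p; rewrite HpS Hp.
      rewrite (bigD1 p) //= HpV Hp /= lerDl; apply: sumr_ge0 => q _; by case: ifP.
    rewrite exchange_big /= /a mulr_suml; apply: ler_sum => p _.
    case: ifP => HpV /=.
      by rewrite -big_mkcond; exact: child_Ps.
    by rewrite big1 // mul0r.
  have Hx : \sum_(c in Rt) x c = \sum_(c in Rt) (x c - `|n c|) + \sum_(c in Rt) `|n c|.
    by rewrite -big_split; apply: eq_bigr => c _ /=; lra.
  rewrite [X in _ <= X]big_split /= in HF5.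
  rewrite Hsplit Hx; lra.
have ha0 : forall i, 0 <= a i.
  by move=> i; apply: sumr_ge0 => c _; case: ifP.
have hE10 : forall i, 0 <= E1 i by move=> i; apply: sumr_ge0 => c _; case: ifP.
have hE20 : forall i, 0 <= E2 i by move=> i; apply: sumr_ge0 => c _; case: ifP.
have hN0 : forall i, 0 <= N i by move=> i; apply: sumr_ge0 => c _; case: ifP.
have hrec := @recur_sum R a (fun i => E2 i + N i) l ha0.
have {hrec} hrec : \sum_(i < l.+1) a i <= 2 * \sum_(i < l.+1) (E2 i + N i).
  apply: hrec => //; first by rewrite step5 addr_ge0.
have hnoise : \sum_(i < l.+1) ((2 : R) ^+ i)^-1 *
              \sum_(c | (level c == i) && (c \in V i :|: S i)) `|nu c| = \sum_(i < l.+1) N i.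
  apply: eq_bigr => i _; rewrite mulr_sumr big_mkcond /N; apply: eq_bigr => c _.
  case: ifP => // /andP[/eqP Hl _]; rewrite /n normrM ger0_norm ?Hl //.
  by rewrite invr_ge0 exprn_ge0.
rewrite hnoise /norm1 [X in X <= _]sum_levels [X in 3 * X]sum_levels -/(L _).
have h1 : \sum_(i < l.+1) L i <= \sum_(i < l.+1) (NS i + E1 i + a i).
  by apply: ler_sum => i _; apply: step2; rewrite -ltnS.
have h2 : \sum_(i < l.+1) NS i <= \sum_(i < l.+1) N i.
  by apply: ler_sum => i _; apply: step4; rewrite -ltnS.
have h3 : \sum_(i < l.+1) (E1 i + E2 i) <= \sum_(i < l.+1) E i.
  by apply: ler_sum => i _; apply: step3; rewrite -ltnS.
have h4 : 0 <= \sum_(i < l.+1) E1 i by apply: sumr_ge0.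
have h5 : 0 <= \sum_(i < l.+1) E2 i by apply: sumr_ge0.
rewrite !big_split /= in h1 h3 hrec.
change (\sum_(i < l.+1) L i <= 3 * \sum_(i < l.+1) E i + 3 * \sum_(i < l.+1) N i).
lra.
Qed.
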